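(* Let $\bar x,\bar x'\in\bar{\mathcal X}$ with $\bar x\neq\bar x'$, and let $Q_{\bar x},Q_{\bar x'}$ be their orthogonal projections onto $\mathcal M$. Then with probability $1$, $Q_{\bar x}\neq Q_{\bar x'}$.
   Context: $\mathcal M\subset\mathbb R^d$ is an $m$-dimensional ($m<d$) smooth compact connected manifold without boundary with reach $R>0$; $\mu$ is a probability measure on $\mathcal M$ with a density with respect to volume; natural data are i.i.d. $\sim\mu$, and each augmented point $\bar x$ is generated from a natural point $x$ with law $(\varepsilon_{\rm p}\sqrt{2\pi})^{-d}\exp(-\|x-\bar x\|^2/(2\varepsilon_{\rm p}^2))$, where $\varepsilon_{\rm p}=\eta^{1/d}\varepsilon^{\tau+1}$ with $\tau,\eta>0$ and $0<\varepsilon\le\min\{1,R/2\}$. It is assumed that all augmented points lie in the tubular neighbourhood $\{x+h:x\in\mathcal M, h\perp T_x\mathcal M,\|h\|<\varepsilon^{\tau+1}\}$, so each has a unique nearest point (orthogonal projection) $Q_{\bar x}$ on $\mathcal M$. *)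

(* Defs.v *)
From HB Require Import structures.
From mathcomp Require Import all_boot all_order all_algebra.
From mathcomp Require Import all_classical all_reals all_analysis.

Unset Printing Implicit Defensive.

Import Order.TTheory GRing.Theory Num.Theory.
Import numFieldNormedType.Exports.

Local Open Scope classical_set_scope.
Local Open Scope ring_scope.

Definition enorm {R : realType} {d : nat} (v : 'rV[R]_d) : R :=
  Num.sqrt (\sum_(i < d) v ord0 i ^+ 2).

Definition edot {R : realType} {d : nat} (u v : 'rV[R]_d) : R :=
  \sum_(i < d) u ord0 i * v ord0 i.

Definition Rd (R : realType) (d : nat) := g_sigma_algebraType (@open 'rV[R]_d).

Definition is_nearest {R : realType} {d : nat} (M : set 'rV[R]_d) (y p : 'rV[R]_d) :=
  M p /\ forall q, M q -> enorm (y - p) <= enorm (y - q).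

Definition unique_nearest_within {R : realType} {d : nat} (M : set 'rV[R]_d) (r : R) :=
  forall y, (exists q, M q /\ enorm (y - q) < r) -> exists! p, is_nearest M y p.

Definition reach {R : realType} {d : nat} (M : set 'rV[R]_d) : \bar R :=
  ereal_sup [set r%:E | r in [set r : R | 0 <= r /\ unique_nearest_within M r]].

Fixpoint iter_dir {R : realType} {m d : nat} (vs : seq 'rV[R]_m)
    (f : 'rV[R]_m -> 'rV[R]_d) : 'rV[R]_m -> 'rV[R]_d :=
  if vs is v :: vs' then fun x => 'D_v (iter_dir vs' f) x else f.

Definition smooth_on {R : realType} {m d : nat} (W : set 'rV[R]_m)
    (f : 'rV[R]_m -> 'rV[R]_d) :=
  forall (vs : seq 'rV[R]_m) x, W x ->
    {for x, continuous (iter_dir vs f)} /\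
    forall v, derivable (iter_dir vs f) x v.

Definition embedded_submanifold {R : realType} (m d : nat) (M : set 'rV[R]_d) :=
  forall p, M p ->
  exists (U : set 'rV[R]_d) (W : set 'rV[R]_m) (phi : 'rV[R]_m -> 'rV[R]_d),
    [/\ [/\ open U, U p, open W & smooth_on W phi],
        phi @` W = M `&` U,
        {in W &, injective phi},
        (* the inverse M `&` U -> W is continuous *)
        (forall w, W w -> forall e, 0 < e -> exists2 del, 0 < del &
           forall w', W w' -> enorm (phi w' - phi w) < del -> enorm (w' - w) < e)
      &
        (forall w, W w -> forall v, 'D_v phi w = 0 -> v = 0)].

Definition tangent {R : realType} {d : nat} (M : set 'rV[R]_d) (x v : 'rV[R]_d) :=
  exists (gamma : R -> 'rV[R]_d) (e : R), [/\ 0 < e,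
    (forall t, `|t| < e -> M (gamma t)), gamma 0 = x & is_derive (0 : R) (1 : R) gamma v].

Definition tube {R : realType} {d : nat} (M : set 'rV[R]_d) (r : R) : set 'rV[R]_d :=
  [set y | exists x h, [/\ M x, (forall v, tangent M x v -> edot h v = 0),
                           enorm h < r & y = x + h]].

Definition ediam {R : realType} {d : nat} (C : set 'rV[R]_d) : \bar R :=
  ereal_sup [set z | exists x y, [/\ C x, C y & z = (enorm (x - y))%:E]].

Definition hausdorff_pre {R : realType} {d : nat} (m : nat) (del : R)
    (A : set 'rV[R]_d) : \bar R :=
  ereal_inf [set s | exists C : nat -> set 'rV[R]_d,
    [/\ A `<=` \bigcup_k C k, (forall k, (ediam (C k) < del%:E)%E)
      & s = (\sum_(0 <= k <oo) (((fine (ediam (C k)) / 2) ^+ m)%:E))%E]].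

Definition hausdorff {R : realType} {d : nat} (m : nat) (A : set 'rV[R]_d) : \bar R :=
  ereal_sup [set hausdorff_pre m del A | del in [set del : R | 0 < del]].

Definition has_volume_density {R : realType} {d : nat} (m : nat)
    (M : set 'rV[R]_d) (mu : set (Rd R d) -> \bar R) :=
  forall A : set (Rd R d), measurable A -> hausdorff m (A `&` M) = 0%E -> mu A = 0%E.

Fixpoint iint {R : realType} (n : nat) (F : (nat -> R) -> \bar R) : \bar R :=
  match n with
  | 0 => F (fun _ => 0)
  | n'.+1 => (\int[@lebesgue_measure R]_t
               iint n' (fun z => F (fun k => if k == n' then t else z k)))%E
  end.

Definition vec {R : realType} (d : nat) (z : nat -> R) : 'rV[R]_d := \row_(i < d) z i.

Definition gpdf {R : realType} {d : nat} (s : R) (u : 'rV[R]_d) : R :=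
  (s * Num.sqrt (2 * pi)) ^- d * expR (- (enorm u ^+ 2) / (2 * s ^+ 2)).

(* probability that (xbar, xbar') lands in E, where xbar, xbar' are independent
   augmentations (noise level s) of the natural points x, x' *)
Definition aug_pair {R : realType} (d : nat) (s : R) (x x' : 'rV[R]_d)
    (E : set ('rV[R]_d * 'rV[R]_d)) : \bar R :=
  iint d (fun z => iint d (fun z' =>
    ((\1_E (vec d z, vec d z') : R) * gpdf s (vec d z - x) * gpdf s (vec d z' - x'))%:E)).

(* xbar, xbar' augmentations of two distinct natural points x, x' i.i.d. ~ mu *)
Definition aug_prob_indep {R : realType} (d : nat) (mu : probability (Rd R d) R)
    (s : R) (E : set ('rV[R]_d * 'rV[R]_d)) : \bar R :=
  (\int[mu]_x \int[mu]_x' aug_pair d s x x' E)%E.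

(* xbar, xbar' two augmentations of the same natural point x ~ mu *)
Definition aug_prob_same {R : realType} (d : nat) (mu : probability (Rd R d) R)
    (s : R) (E : set ('rV[R]_d * 'rV[R]_d)) : \bar R :=
  (\int[mu]_x aug_pair d s x x E)%E.

(* Main.v *)
Require Import Defs.
From HB Require Import structures.
From mathcomp Require Import all_boot all_order all_algebra.
From mathcomp Require Import all_classical all_reals all_analysis.
From mathcomp Require Import ring lra.
Import Order.TTheory GRing.Theory Num.Theory.
Import numFieldNormedType.Exports.
Local Open Scope classical_set_scope.
Local Open Scope ring_scope.
Lemma iint_zero {R : realType} n (F : (nat -> R) -> \bar R) :
  (forall z, F z = 0%E) -> iint n F = 0%E.
Proof.
elim: n F => [|n IH] F F0 /=; first exact: F0.
under eq_integral do rewrite IH //.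
by rewrite integral0.
Qed.

Lemma int_pt0 {R : realType} (g : R -> \bar R) t0 :
  (forall t, t != t0 -> g t = 0%E) -> (\int[@lebesgue_measure R]_t g t = 0)%E.
Proof.
move=> g0.
have -> : g = (g \_ [set t0]).
  apply/funext => t; rewrite /patch; case: ifPn => //.
  move=> ne; apply: g0; apply/eqP => e; move: ne; rewrite e; by rewrite mem_set.
by rewrite -integral_mkcond integral_set1.
Qed.

Lemma iint_hyper {R : realType} n (F : (nat -> R) -> \bar R) (v : nat -> R) c :
  (exists i, (i < n)%N /\ v i != 0) ->
  (forall z, F z != 0%E -> \sum_(i < n) v i * z i = c) -> iint n F = 0%E.
Proof.
elim: n F c => [|n IH] F c [i [hi vi]] hF /=; first by [].
have [[j [hj vj]]|none] := pselect (exists j, (j < n)%N /\ v j != 0).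
  under eq_integral => t _.
    rewrite (IH _ (c - v n * t)); first over.
      by exists j.
    move=> z /hF; rewrite big_ord_recr /= eqxx => <-.
    rewrite addrK; apply: eq_bigr => k _; by rewrite (ltn_eqF (ltn_ord k)).
  by rewrite integral0.
have vn : v n != 0.
  apply/negP => /eqP vn0; move: vi; have : (i <= n)%N by [].
  rewrite leq_eqVlt => /orP[/eqP ->|lt]; first by rewrite vn0 eqxx.
  by move=> vi; apply: none; exists i.
apply: (@int_pt0 _ _ (c / v n)) => t tne.
apply: iint_zero => z; apply/eqP; apply/negPn/negP => /hF.
rewrite big_ord_recr /= eqxx big1 ?add0r.
  move=> e; move: tne; rewrite -e mulrC mulKf // eqxx //.
move=> k _; case: (eqVneq (v k) 0) => [->|nz]; first by rewrite mul0r.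
by exfalso; apply: none; exists k; split.
Qed.
Section edot.
Context {R : realType} {d : nat}.
Implicit Types u v w : 'rV[R]_d.

Lemma edotC u v : edot u v = edot v u.
Proof. by apply: eq_bigr => i _; rewrite mulrC. Qed.

Lemma edotDr u v w : edot u (v + w) = edot u v + edot u w.
Proof. by rewrite /edot -big_split; apply: eq_bigr => i _; rewrite !mxE mulrDr. Qed.

Lemma edotNr u v : edot u (- v) = - edot u v.
Proof. by rewrite /edot -sumrN; apply: eq_bigr => i _; rewrite !mxE mulrN. Qed.

Lemma edotZr u a v : edot u (a *: v) = a * edot u v.
Proof. by rewrite /edot mulr_sumr; apply: eq_bigr => i _; rewrite !mxE mulrCA. Qed.

Lemma edotDl u v w : edot (v + w) u = edot v u + edot w u.
Proof. by rewrite edotC edotDr !(edotC u). Qed.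

Lemma edotNl u v : edot (- v) u = - edot v u.
Proof. by rewrite edotC edotNr edotC. Qed.

Lemma edotZl u a v : edot (a *: v) u = a * edot v u.
Proof. by rewrite edotC edotZr edotC. Qed.

Lemma edot_ge0 u : 0 <= edot u u.
Proof. by apply: sumr_ge0 => i _; rewrite -expr2 sqr_ge0. Qed.

Lemma enorm_le u v : enorm u <= enorm v -> edot u u <= edot v v.
Proof.
have E w : \sum_(i < d) w ord0 i ^+ 2 = edot w w by apply: eq_bigr => i _; rewrite expr2.
by rewrite /enorm !E ler_sqrt // edot_ge0.
Qed.

Lemma edot_cvg {T : Type} {F : set_system T} {FF : Filter F} (f g : T -> 'rV[R]_d) l l' :
  f @ F --> l -> g @ F --> l' -> (fun x => edot (f x) (g x)) @ F --> edot l l'.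
Proof.
move=> fl gl; rewrite /edot; apply: cvg_big => [|i _].
  exact: add_continuous.
have h1 : (fun x => f x ord0 i) @ F --> l ord0 i.
  exact: (@continuous_cvg _ _ _ F FF f (fun M : 'rV[R]_d => M ord0 i) l (@coord_continuous R 1 d ord0 i l) fl).
have h2 : (fun x => g x ord0 i) @ F --> l' ord0 i.
  exact: (@continuous_cvg _ _ _ F FF g (fun M : 'rV[R]_d => M ord0 i) l' (@coord_continuous R 1 d ord0 i l') gl).
exact: (cvgM h1 h2).
Qed.

End edot.
Arguments edot_cvg {R d T F FF f g l l'}.

Lemma right_dnbhs {R : realType} : (0 : R)^'+ `=>` (0 : R)^'.
Proof.
move=> P; rewrite /at_right /dnbhs /within /=; apply: filterS => y H y0.
by apply: H; rewrite gt_eqF.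
Qed.

Lemma left_dnbhs {R : realType} : (0 : R)^'- `=>` (0 : R)^'.
Proof.
move=> P; rewrite /at_left /dnbhs /within /=; apply: filterS => y H y0.
by apply: H; rewrite lt_eqF.
Qed.

Lemma normal_vec {R : realType} (m d : nat) (M : set 'rV[R]_d) p :
  (0 < m)%N -> embedded_submanifold m d M -> M p ->
  exists v : 'rV[R]_d, v != 0 /\ forall y, is_nearest M y p -> edot (y - p) v = 0.
Proof.
move=> m0 emb Mp.
have [U [W [phi [[oU Up oW sm] img inj _ imm]]]] := emb p Mp.
have : (M `&` U) p by [].
rewrite -img => -[w0 Ww0 phiw0].
pose e1 : 'rV[R]_m := delta_mx ord0 (Ordinal m0).
have e1n0 : e1 != 0.
  apply/eqP => /matrixP /(_ ord0 (Ordinal m0)); rewrite !mxE !eqxx /= => /eqP; by rewrite oner_eq0.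
have der : derivable phi w0 e1 := (sm [::] w0 Ww0).2 e1.
exists ('D_e1 phi w0); split.
  by apply/eqP => /(imm w0 Ww0 e1) /eqP; apply/negP.
move=> y [_ near_y].
pose q h := h^-1 *: (phi (h *: e1 + w0) - phi w0).
have qv : q h @[h --> (0:R)^'] --> 'D_e1 phi w0.
  by have := derivableP der; case.
have key h : h != 0 -> W (h *: e1 + w0) ->
    2 * edot (y - p) (q h) * h <= h * edot (q h) (q h) * h.
  move=> h0 hW.
  have Mg : M (phi (h *: e1 + w0)).
    have : (phi @` W) (phi (h *: e1 + w0)) by exists (h *: e1 + w0).
    by rewrite img => -[].
  have := enorm_le _ _ (near_y _ Mg).
  have -> : y - phi (h *: e1 + w0) = (y - p) - h *: q h.
    by rewrite /q scalerA mulfV // scale1r phiw0 opprB addrA subrK.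
  move: (y - p) (q h) => a b.
  rewrite !(edotDl, edotDr, edotNl, edotNr, edotZl, edotZr) (edotC b a).
  move=> H; nra.
set A0 := edot (y - p) ('D_e1 phi w0).
have ha : (fun h => 2 * edot (y - p) (q h)) @ (0:R)^' --> 2 * A0.
  apply: cvgM; first exact: cvg_cst.
  exact: (edot_cvg (cvg_cst (y - p)) qv).
have hb : (fun h => h * edot (q h) (q h)) @ (0:R)^' --> 0.
  have hid : (fun h : R => h) @ (0:R)^' --> (0:R).
    apply: cvg_within_filter; exact: cvg_id.
  have H := (cvgM hid (edot_cvg qv qv)); rewrite mul0r in H; exact: H.
have NW : \forall h \near (0:R), W (h *: e1 + w0).
  have c0 : (fun h : R => h *: e1 + w0) @ (0:R) --> w0.
    have H := cvgD (cvgZ (@cvg_id _ (nbhs (0:R))) (cvg_cst e1)) (cvg_cst w0).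
    rewrite scale0r add0r in H; exact: H.
  apply: c0; exact: open_nbhs_nbhs.
have r1 : 2 * A0 <= 0.
  apply: (ler_cvg_to (cvg_trans (cvg_app _ right_dnbhs) ha)
                     (cvg_trans (cvg_app _ right_dnbhs) hb)).
  move: NW; rewrite /at_right /within /=; apply: filterS => h hW h0.
  have := key h (lt0r_neq0 h0) hW; by rewrite ler_pM2r.
have r2 : 0 <= 2 * A0.
  apply: (ler_cvg_to (cvg_trans (cvg_app _ left_dnbhs) hb)
                     (cvg_trans (cvg_app _ left_dnbhs) ha)).
  move: NW; rewrite /at_left /within /=; apply: filterS => h hW h0.
  have := key h (ltr0_neq0 h0) hW; by rewrite ler_nM2r.
lra.
Qed.

Lemma uniq_near {R : realType} {d : nat} (M : set 'rV[R]_d) Rch r y p1 p2 :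
  reach M = Rch%:E -> r < Rch -> tube M r y ->
  is_nearest M y p1 -> is_nearest M y p2 -> p1 = p2.
Proof.
move=> rM rR [x [h [Mx _ hr ->]]] n1 n2.
have : (r%:E < reach M)%E by rewrite rM lte_fin.
rewrite /reach => /ereal_sup_gt [_ [r' [_ un] <-]]; rewrite lte_fin => rr'.
have [p [_ up]] : exists! p, is_nearest M (x + h) p.
  apply: un; exists x; split => //.
  by rewrite addrAC subrr add0r; apply: lt_trans rr'.
by rewrite -(up _ n1) -(up _ n2).
Qed.

Theorem lemma3p1 (R : realType) (m d : nat) (M : set 'rV[R]_d)
    (Rch tau eta eps : R) (mu : probability (Rd R d) R) :
  (0 < m)%N -> (m < d)%N ->
  embedded_submanifold m d M -> compact M -> connected M ->
  reach M = Rch%:E -> 0 < Rch ->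
  mu M = 1%E -> has_volume_density m M mu ->
  0 < tau -> 0 < eta -> 0 < eps -> eps <= Num.min 1 (Rch / 2) ->
  let eps_p := eta `^ (d%:R^-1) * eps `^ (tau + 1) in
  let bad := [set yy : 'rV[R]_d * 'rV[R]_d |
                [/\ tube M (eps `^ (tau + 1)) yy.1,
                    tube M (eps `^ (tau + 1)) yy.2
                  & exists p, is_nearest M yy.1 p /\ is_nearest M yy.2 p]] in
  aug_prob_indep d mu eps_p bad = 0%E /\ aug_prob_same d mu eps_p bad = 0%E.
Proof.
move=> m0 md emb _ _ rM R0 _ _ tau0 _ eps0 epsm eps_p bad.
have rR : eps `^ (tau + 1) < Rch.
  move: epsm; rewrite le_min => /andP[e1 e2].
  have : eps `^ (tau + 1) <= eps.
    apply: ge1r_powR; first by rewrite eps0 e1.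
    by rewrite lerDr ltW.
  move=> h; apply: (le_lt_trans h); apply: (le_lt_trans e2).
  by rewrite ltr_pdivrMr // ltr_pMr // ltr1n.
have claim : forall x x', aug_pair d eps_p x x' bad = 0%E.
  move=> x x'; apply: iint_zero => z.
  have [[p0 [tz nz]]|nop] := pselect (exists p, tube M (eps `^ (tau + 1)) (vec d z) /\
                                        is_nearest M (vec d z) p); last first.
    apply: iint_zero => z'.
    rewrite indicE memNset ?mul0r ?mul0r //.
    by move=> [/= t1 _ [p [n1 _]]]; apply: nop; exists p.
  have [v [vn0 vperp]] := @normal_vec R m d M p0 m0 emb nz.1.
  pose vv (i : nat) := \sum_(j < d | (j : nat) == i) v ord0 j.
  have vvE (i : 'I_d) : vv i = v ord0 i.
    by rewrite /vv (big_pred1 i).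
  apply: (@iint_hyper R d _ vv (edot p0 v)).
    have [j vj] : exists j, v ord0 j != 0.
      apply/not_existsP => H; move/eqP: vn0; apply; apply/rowP => j.
      by rewrite mxE; apply/eqP/negbNE/negP/H.
    by exists j; rewrite vvE.
  move=> z' Fz.
  have [Bz|nB] := pselect (bad (vec d z, vec d z')); last first.
    by move: Fz; rewrite indicE memNset // !mul0r eqxx.
  case: Bz => /= _ tz' [p [n1 n2]].
  have pp0 : p = p0 by apply: (uniq_near _ _ _ _ _ _ rM rR tz n1 nz).
  subst p.
  have := vperp _ n2; rewrite edotDl edotNl => /eqP; rewrite subr_eq0 => /eqP <-.
  rewrite /edot; apply: eq_bigr => i _; by rewrite vvE /vec mxE mulrC.
split.
  rewrite /aug_prob_indep (eq_integral (fun _ => 0%E)) ?integral0 // => x _.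
  by rewrite (eq_integral (fun _ => 0%E)) ?integral0 // => x' _; exact: claim.
by rewrite /aug_prob_same (eq_integral (fun _ => 0%E)) ?integral0 // => x _; exact: claim.
Qed.
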